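(* Assume $p_{X,Y}\ne p_Xp_Y$ (where $p_{X,Y}=p_Xp_{Y|X}$). Let $(X_1,Y_1),(X_2,Y_2)$ be distributed according to $p_{X,Y}$ marginally, and define $p_0=\Pr(Y_1\ne Y_2)$ when $X_1,X_2$ are independent (each $Y_k$ drawn from $p_{Y|X}(\cdot\mid X_k)$ independently), and $p_1=\Pr(Y_1\neq Y_2)$ when $X_1=X_2$ (and $Y_1,Y_2$ are conditionally independent given $X_1$, each with law $p_{Y|X}(\cdot\mid X_1)$). Then $p_1<p_0$. Fix any $\tau$ with $p_1<\tau<p_0$ (not depending on $n$). Let $C_1^{m_n},\dots,C_K^{m_n}$ be the columns of $\mathbf{D}^{(2)}$, and consider the algorithm that, for each $j\in[K-1]$, declares $C_j^{m_n}$ and $C_{j+1}^{m_n}$ to be replicas (noisy copies of the same column of $\mathbf{D}^{(1)}$) if $d_H(C_j^{m_n},C_{j+1}^{m_n})<m_n\tau$ and declares them to come from different columns of $\mathbf{D}^{(1)}$ otherwise. Let $E_j$ be the event that this decision is wrong for the pair $(C_j^{m_n},C_{j+1}^{m_n})$. If $m_n$ grows exponentially in $n$ (i.e. the database growth rate $R=\lim_n \frac1n\log m_n$ satisfies $R>0$), then $$\Pr\Big(\bigcup_{j=1}^{K-1}E_j\Big)\to 0\quad\text{as } n\to\infty.$$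
   Context: $\mathbf{D}^{(1)}$ is an $m_n\times n$ matrix with i.i.d. entries from $p_X$ on a finite set $\mathfrak{X}$; $S^n$ has i.i.d. entries from $p_S$ on $\{0,\dots,s_{\max}\}$; $\boldsymbol{\Theta}_n$ is a uniform permutation of $[m_n]$, independent of everything else. $\mathbf{D}^{(2)}$ is obtained by replacing, in row $i$, the entry at column $j$ by the empty string if $S_j=0$ and by $S_j$ conditionally i.i.d. outputs of the channel $p_{Y|X}$ with input $D^{(1)}_{\boldsymbol{\Theta}_n^{-1}(i),j}$ if $S_j\ge1$ (all noise independent). Hence $\mathbf{D}^{(2)}$ has $K=\sum_j S_j$ columns, and two consecutive columns of $\mathbf{D}^{(2)}$ are replicas if they are noisy copies of the same column of $\mathbf{D}^{(1)}$. $d_H$ denotes Hamming distance between two columns of length $m_n$. *)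

(* Defs.v *)
From HB Require Import structures.
From mathcomp Require Import all_boot all_order all_algebra all_fingroup.
From mathcomp Require Import all_classical all_reals all_analysis.
Set Implicit Arguments. Unset Strict Implicit. Unset Printing Implicit Defensive.
Import Order.TTheory GRing.Theory Num.Theory.
Local Open Scope ring_scope.

Definition is_pmf (R : realType) (T : finType) (p : T -> R) : Prop :=
  (forall t, 0 <= p t) /\ \sum_(t : T) p t = 1.

Definition is_channel (R : realType) (X Y : finType) (W : X -> Y -> R) : Prop :=
  forall x, is_pmf (W x).

Definition pY (R : realType) (X Y : finType) (pX : X -> R) (W : X -> Y -> R) (y : Y) : R :=
  \sum_(x : X) pX x * W x y.

Definition p0 (R : realType) (X Y : finType) (pX : X -> R) (W : X -> Y -> R) : R :=
  \sum_(x1 : X) \sum_(x2 : X) \sum_(y1 : Y) \sum_(y2 : Y)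
     (if y1 != y2 then pX x1 * pX x2 * W x1 y1 * W x2 y2 else 0).

Definition p1 (R : realType) (X Y : finType) (pX : X -> R) (W : X -> Y -> R) : R :=
  \sum_(x : X) \sum_(y1 : Y) \sum_(y2 : Y)
     (if y1 != y2 then pX x * W x y1 * W x y2 else 0).

(* Columns of D^(2), in order: the pair (j,k) is the k-th noisy copy
   (k < S_j) of column j of D^(1).  Its length is K = sum_j S_j. *)
Definition d2_cols (n smax : nat) (S : {ffun 'I_n -> 'I_smax.+1})
  : seq ('I_n * 'I_smax) :=
  [seq jk <- [seq (j, k) | j <- enum 'I_n, k <- enum 'I_smax]
     | (nat_of_ord jk.2 < nat_of_ord (S jk.1))%N].

Definition d2_hamming (Y : finType) (m n smax : nat)
  (Yo : {ffun 'I_m * 'I_n * 'I_smax -> Y}) (c c' : 'I_n * 'I_smax) : nat :=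
  #|[pred i : 'I_m | Yo (i, c.1, c.2) != Yo (i, c'.1, c'.2)]|.

Definition pair_error (R : realType) (Y : finType) (m n smax : nat)
  (Yo : {ffun 'I_m * 'I_n * 'I_smax -> Y}) (tau : R) (c c' : 'I_n * 'I_smax) : bool :=
  ((d2_hamming Yo c c')%:R < m%:R * tau) != (c.1 == c'.1).

Definition some_error (R : realType) (Y : finType) (m n smax : nat)
  (S : {ffun 'I_n -> 'I_smax.+1}) (Yo : {ffun 'I_m * 'I_n * 'I_smax -> Y}) (tau : R) : bool :=
  let cs := d2_cols S in
  has (fun cc => pair_error Yo tau cc.1 cc.2) (zip cs (behead cs)).

(* Sample space: D^(1) (i.i.d. p_X entries), S^n (i.i.d. p_S), Theta
   (uniform permutation of the m rows), and the noise Yo: Yo (i,j,k) is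
   the k-th channel output for row i of D^(2), column j of D^(1), with input
   D^(1)_{Theta^{-1}(i), j}; all outputs are conditionally independent.
   Only the outputs with k < S_j are used (they form D^(2)); the remaining
   ones are independent dummy draws that are marginalized out. *)
Definition error_prob (R : realType) (X Y : finType) (pX : X -> R)
  (smax : nat) (pS : 'I_smax.+1 -> R) (W : X -> Y -> R) (m n : nat) (tau : R) : R :=
  \sum_(D1 : {ffun 'I_m * 'I_n -> X})
  \sum_(S : {ffun 'I_n -> 'I_smax.+1})
  \sum_(Th : {perm 'I_m})
  \sum_(Yo : {ffun 'I_m * 'I_n * 'I_smax -> Y})
    (if some_error S Yo tau then
       (\prod_(ij : 'I_m * 'I_n) pX (D1 ij)) *
       (\prod_(j : 'I_n) pS (S j)) *
       (m`!%:R)^-1 *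
       (\prod_(ijk : 'I_m * 'I_n * 'I_smax)
           W (D1 ((Th^-1)%g ijk.1.1, ijk.1.2)) (Yo ijk))
     else 0).

(* Main.v *)
Require Import Defs.
From HB Require Import structures.
From mathcomp Require Import all_boot all_order all_algebra all_fingroup.
From mathcomp Require Import all_classical all_reals all_analysis.
From mathcomp Require Import ring lra.
Import Order.TTheory GRing.Theory Num.Theory numFieldNormedType.Exports.
Local Open Scope classical_set_scope.
Local Open Scope ring_scope.

Set Implicit Arguments. Unset Strict Implicit. Unset Printing Implicit Defensive.

Definition Ep (R : realType) (T A : finType) (q : T -> A -> R)
  (F : {ffun T -> A} -> R) : R :=
  \sum_(w : {ffun T -> A}) (\prod_t q t (w t)) * F w.

Lemma Ep_ext (R : realType) (T A : finType) (q : T -> A -> R) F G :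
  (forall w, F w = G w) -> Ep q F = Ep q G.
Proof. by move=> H; apply: eq_bigr => w _; rewrite H. Qed.

Lemma Ep_sum (R : realType) (T A : finType) (q : T -> A -> R) (I : finType)
  (G : I -> {ffun T -> A} -> R) :
  Ep q (fun w => \sum_i G i w) = \sum_i Ep q (G i).
Proof.
rewrite /Ep exchange_big /=; apply: eq_bigr => w _; by rewrite mulr_sumr.
Qed.

Lemma Ep_scale (R : realType) (T A : finType) (q : T -> A -> R) c F :
  Ep q (fun w => c * F w) = c * Ep q F.
Proof.
rewrite /Ep mulr_sumr; apply: eq_bigr => w _; by rewrite mulrCA.
Qed.

Lemma Ep_prod (R : realType) (T A : finType) (q : T -> A -> R) (g : T -> A -> R) :
  Ep q (fun w => \prod_t g t (w t)) = \prod_t \sum_a q t a * g t a.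
Proof.
rewrite bigA_distr_bigA /Ep; apply: eq_bigr => w _; by rewrite -big_split.
Qed.

Lemma sum_ind (R : realType) (A : finType) (f : A -> R) (y : A) :
  \sum_a f a * (a == y)%:R = f y.
Proof.
rewrite (bigD1 y) //= eqxx mulr1 big1 ?addr0 // => a /negbTE ->; by rewrite mulr0.
Qed.

Lemma prod_if1 (R : realType) (T : finType) (t0 : T) (X : T -> R) :
  \prod_t (if t == t0 then X t else 1) = X t0.
Proof. by rewrite -big_mkcond big_pred1_eq. Qed.

Lemma Ep_inds (R : realType) (T A : finType) (q : T -> A -> R)
  (Hq : forall t, \sum_a q t a = 1) (l : seq (T * A)) :
  uniq (map fst l) ->
  Ep q (fun w => \prod_(p <- l) ((w p.1 == p.2)%:R)) = \prod_(p <- l) q p.1 p.2.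
Proof.
pose g (l : seq (T * A)) (t : T) (a : A) := \prod_(p <- l) (if t == p.1 then (a == p.2)%:R else 1 : R).
have E1 : forall w : {ffun T -> A},
   \prod_(p <- l) ((w p.1 == p.2)%:R : R) = \prod_t g l t (w t).
  move=> w; rewrite /g exchange_big /=; apply: eq_bigr => p _.
  by rewrite (prod_if1 p.1 (fun t => ((w t == p.2)%:R : R))).
rewrite (Ep_ext _ E1) Ep_prod; clear E1.
elim: l => [|p l IH] /=.
  move=> _; rewrite [RHS]big_nil; apply: big1 => t _; under eq_bigr do rewrite /g big_nil mulr1; exact: Hq.
case/andP=> Hp Hu; rewrite big_cons -(IH Hu).
have g1 : forall a, g l p.1 a = 1.
  move=> a; rewrite /g big_seq big1 // => p' Hp'.
  case: eqP => // E; case/negP: Hp; rewrite E; exact: map_f.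
have gc : forall t a, g (p :: l) t a = (if t == p.1 then (a == p.2)%:R else 1) * g l t a.
  by move=> t a; rewrite /g big_cons.
rewrite (bigD1 p.1) //= [X in _ = _ * X](bigD1 p.1) //=.
have -> : \sum_a q p.1 a * g (p :: l) p.1 a = q p.1 p.2.
  under eq_bigr do rewrite gc eqxx g1 mulr1; exact: sum_ind.
have -> : \sum_a q p.1 a * g l p.1 a = 1.
  under eq_bigr do rewrite g1 mulr1; exact: Hq.
rewrite mul1r; congr (_ * _).
apply: eq_bigr => t /negbTE Ht; apply: eq_bigr => a _; by rewrite gc Ht mul1r.
Qed.

Lemma sum_ind' (R : realType) (A : finType) (f : A -> R) (y : A) :
  \sum_a f a * (y == a)%:R = f y.
Proof. by under eq_bigr do rewrite eq_sym; exact: sum_ind. Qed.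

Lemma Ep1 (R : realType) (T A : finType) (q : T -> A -> R)
  (Hq : forall t, \sum_a q t a = 1) (s : T) (h : A -> R) :
  Ep q (fun w => h (w s)) = \sum_a q s a * h a.
Proof.
have E : forall w : {ffun T -> A}, h (w s) =
   \sum_a h a * \prod_(p <- [:: (s, a)]) ((w p.1 == p.2)%:R : R).
  by move=> w; under eq_bigr do rewrite big_cons big_nil mulr1 /=; rewrite sum_ind'.
rewrite (Ep_ext _ E) Ep_sum; apply: eq_bigr => a _.
by rewrite Ep_scale Ep_inds // big_cons big_nil mulr1 mulrC.
Qed.

Lemma Ep_one (R : realType) (T A : finType) (q : T -> A -> R)
  (Hq : forall t, \sum_a q t a = 1) : Ep q (fun _ => 1) = 1.
Proof.
have E : forall w : {ffun T -> A}, (1 : R) = \prod_(p <- [::]) ((w p.1 == p.2)%:R : R).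
  by move=> w; rewrite big_nil.
by rewrite (Ep_ext _ E) Ep_inds // big_nil.
Qed.

Lemma Ep_add (R : realType) (T A : finType) (q : T -> A -> R) F G :
  Ep q (fun w => F w + G w) = Ep q F + Ep q G.
Proof. by rewrite /Ep -big_split; apply: eq_bigr => w _; rewrite mulrDr. Qed.

Lemma Ep2 (R : realType) (T A : finType) (q : T -> A -> R)
  (Hq : forall t, \sum_a q t a = 1) (s1 s2 : T) (h : A -> A -> R) :
  s1 != s2 ->
  Ep q (fun w => h (w s1) (w s2)) = \sum_a \sum_b q s1 a * q s2 b * h a b.
Proof.
move=> H12.
have E : forall w : {ffun T -> A}, h (w s1) (w s2) =
   \sum_a \sum_b h a b * \prod_(p <- [:: (s1, a); (s2, b)]) ((w p.1 == p.2)%:R : R).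
  move=> w; under eq_bigr do under eq_bigr do rewrite !big_cons big_nil mulr1 /= mulrA.
  under eq_bigr do rewrite (sum_ind' (fun b => h _ b * _)).
  by rewrite (sum_ind' (fun a => h a (w s2))).
rewrite (Ep_ext _ E) Ep_sum; apply: eq_bigr => a _.
rewrite Ep_sum; apply: eq_bigr => b _.
rewrite Ep_scale Ep_inds //=; last by rewrite inE H12.
by rewrite !big_cons big_nil mulr1 mulrC /=.
Qed.

Lemma Ep4 (R : realType) (T A : finType) (q : T -> A -> R)
  (Hq : forall t, \sum_a q t a = 1) (s1 s2 s3 s4 : T) (h : A -> A -> A -> A -> R) :
  uniq [:: s1; s2; s3; s4] ->
  Ep q (fun w => h (w s1) (w s2) (w s3) (w s4)) =
  \sum_a \sum_b \sum_c \sum_d q s1 a * q s2 b * q s3 c * q s4 d * h a b c d.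
Proof.
move=> Hu.
have E : forall w : {ffun T -> A}, h (w s1) (w s2) (w s3) (w s4) =
   \sum_a \sum_b \sum_c \sum_d h a b c d *
     \prod_(p <- [:: (s1, a); (s2, b); (s3, c); (s4, d)]) ((w p.1 == p.2)%:R : R).
  move=> w.
  under eq_bigr do under eq_bigr do under eq_bigr do under eq_bigr do
    rewrite !big_cons big_nil mulr1 /= !mulrA.
  under eq_bigr do under eq_bigr do under eq_bigr do
    rewrite (sum_ind' (fun d => h _ _ _ d * _ * _ * _)).
  under eq_bigr do under eq_bigr do
    rewrite (sum_ind' (fun c => h _ _ c (w s4) * _ * _)).
  under eq_bigr do rewrite (sum_ind' (fun b => h _ b (w s3) (w s4) * _)).
  by rewrite (sum_ind' (fun a => h a (w s2) (w s3) (w s4))).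
rewrite (Ep_ext _ E) Ep_sum; apply: eq_bigr => a _.
rewrite Ep_sum; apply: eq_bigr => b _.
rewrite Ep_sum; apply: eq_bigr => c _.
rewrite Ep_sum; apply: eq_bigr => d _.
rewrite Ep_scale Ep_inds //=.
by rewrite !big_cons big_nil mulr1 mulrC /= !mulrA.
Qed.

Definition Ex (R : realType) (X Y : finType) (pX : X -> R)
  (smax : nat) (pS : 'I_smax.+1 -> R) (W : X -> Y -> R) (m n : nat)
  (F : {ffun 'I_m * 'I_n -> X} -> {ffun 'I_n -> 'I_smax.+1} -> {ffun 'I_m * 'I_n * 'I_smax -> Y} -> R) : R :=
  \sum_(D1 : {ffun 'I_m * 'I_n -> X})
  \sum_(S : {ffun 'I_n -> 'I_smax.+1})
  \sum_(Th : {perm 'I_m})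
  \sum_(Yo : {ffun 'I_m * 'I_n * 'I_smax -> Y})
    (\prod_(ij : 'I_m * 'I_n) pX (D1 ij)) *
       (\prod_(j : 'I_n) pS (S j)) *
       (m`!%:R)^-1 *
       (\prod_(ijk : 'I_m * 'I_n * 'I_smax)
           W (D1 ((Th^-1)%g ijk.1.1, ijk.1.2)) (Yo ijk)) * F D1 S Yo.
Arguments Ex {R X Y} pX {smax} pS W m n F.

Definition qY (R : realType) (X Y : finType) (W : X -> Y -> R) (m n smax : nat)
  (D : {ffun 'I_m * 'I_n -> X}) (t : 'I_m * 'I_n * 'I_smax) (y : Y) : R :=
  W (D (t.1.1, t.1.2)) y.
Arguments qY {R X Y} W {m n} smax D t y.

Lemma Ex_red (R : realType) (X Y : finType) (pX : X -> R)
  (smax : nat) (pS : 'I_smax.+1 -> R) (W : X -> Y -> R) (m n : nat) F :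
  is_pmf pS ->
  Ex pX pS W m n (fun _ _ Yo => F Yo) =
  Ep (fun (_ : 'I_m * 'I_n) x => pX x) (fun D => Ep (qY W smax D) F).
Proof.
move=> [_ HS].
pose Gid (D : {ffun 'I_m * 'I_n -> X}) := Ep (qY W smax D) F.
pose sig (Th : {perm 'I_m}) (D : {ffun 'I_m * 'I_n -> X}) :=
  [ffun ij : 'I_m * 'I_n => D ((Th^-1)%g ij.1, ij.2)].
rewrite /Ex.
transitivity (\sum_(D1 : {ffun 'I_m * 'I_n -> X})
   \sum_(S : {ffun 'I_n -> 'I_smax.+1}) \sum_(Th : {perm 'I_m})
   ((\prod_(j : 'I_n) pS (S j)) * (m`!%:R)^-1) *
   ((\prod_(ij : 'I_m * 'I_n) pX (sig Th D1 ij)) * Gid (sig Th D1))).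
  apply: eq_bigr => D1 _; apply: eq_bigr => S _; apply: eq_bigr => Th _.
  have -> : \prod_(ij : 'I_m * 'I_n) pX (sig Th D1 ij) = \prod_(ij : 'I_m * 'I_n) pX (D1 ij).
    rewrite (reindex_inj (h := fun ij : 'I_m * 'I_n => (Th ij.1, ij.2))) /=.
      by apply: eq_bigr => -[i j] _; rewrite /sig ffunE /= permK.
    by move=> [i j] [i' j'] /= [/perm_inj -> ->].
  rewrite /Gid /Ep !mulr_sumr; apply: eq_bigr => Yo _.
  rewrite /qY; under [in RHS]eq_bigr do rewrite /sig ffunE /=.
  by rewrite !mulrA; congr (_ * _ * _); rewrite mulrAC [in RHS]mulrAC mulrC !mulrA.
rewrite exchange_big /=.
under eq_bigr do rewrite exchange_big /=.
transitivity (\sum_(S : {ffun 'I_n -> 'I_smax.+1}) \sum_(Th : {perm 'I_m})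
   ((\prod_(j : 'I_n) pS (S j)) * (m`!%:R)^-1) * Ep (fun (_ : 'I_m * 'I_n) x => pX x) Gid).
  apply: eq_bigr => S _; apply: eq_bigr => Th _; rewrite -mulr_sumr; congr (_ * _).
  rewrite /Ep [RHS](reindex_inj (h := sig Th)) //=.
  move=> D D' E; apply/ffunP => -[i j].
  move/ffunP: E => /(_ (Th i, j)); by rewrite !ffunE /= permK.
under eq_bigr => S _ do rewrite -mulr_suml.
rewrite -mulr_suml -[RHS]mul1r; congr (_ * _).
under eq_bigr => S _ do rewrite -mulr_sumr sumr_const card_Sn.
rewrite -mulr_suml -(bigA_distr_bigA (fun (i : 'I_n) (j : 'I_smax.+1) => pS j)) /=.
under eq_bigr do rewrite HS.
rewrite big1 // mul1r -(mulr_natr (m`!%:R^-1)) mulVf //.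
Qed.

Definition Phi (R : realType) (X Y : finType) (W : X -> Y -> R) (x x' : X) : R :=
  \sum_a \sum_b W x a * W x' b * (a != b)%:R.

Definition Zi (R : realType) (Y : finType) (m n smax : nat) (c c' : 'I_n * 'I_smax)
  (i : 'I_m) (Yo : {ffun 'I_m * 'I_n * 'I_smax -> Y}) : R :=
  (Yo (i, c.1, c.2) != Yo (i, c'.1, c'.2))%:R.
Arguments Zi {R Y m n smax} c c' i Yo.

Lemma fact4 (R : realType) (A : finType) (q1 q2 q3 q4 : A -> R) (h1 h2 : A -> A -> R) :
  \sum_a \sum_b \sum_c \sum_d q1 a * q2 b * q3 c * q4 d * (h1 a b * h2 c d) =
  (\sum_a \sum_b q1 a * q2 b * h1 a b) * (\sum_c \sum_d q3 c * q4 d * h2 c d).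
Proof.
rewrite mulr_suml; apply: eq_bigr => a _; rewrite mulr_suml; apply: eq_bigr => b _.
rewrite mulr_sumr; apply: eq_bigr => c _; rewrite mulr_sumr; apply: eq_bigr => d _.
ring.
Qed.

Lemma chan_sum (R : realType) (X Y : finType) (W : X -> Y -> R) (m n smax : nat)
  (D : {ffun 'I_m * 'I_n -> X}) :
  is_channel W -> forall t, \sum_a qY W smax D t a = 1.
Proof. by move=> HW t; rewrite /qY; case: (HW (D (t.1.1, t.1.2))). Qed.

Lemma EZ (R : realType) (X Y : finType) (W : X -> Y -> R) (m n smax : nat)
  (D : {ffun 'I_m * 'I_n -> X}) (c c' : 'I_n * 'I_smax) (i : 'I_m) :
  is_channel W -> c != c' ->
  Ep (qY W smax D) (Zi c c' i) = Phi W (D (i, c.1)) (D (i, c'.1)).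
Proof.
move=> HW Hc.
rewrite /Zi (Ep2 (chan_sum D HW) (fun a b => (a != b)%:R)) //.
apply/negP => /eqP [E1 E2]; case/negP: Hc; move: E1 E2; case: c => j k; case: c' => j' k' /= -> -> //.
Qed.

Lemma EZZ (R : realType) (X Y : finType) (W : X -> Y -> R) (m n smax : nat)
  (D : {ffun 'I_m * 'I_n -> X}) (c c' : 'I_n * 'I_smax) (i i' : 'I_m) :
  is_channel W -> c != c' -> i != i' ->
  Ep (qY W smax D) (fun Yo => Zi c c' i Yo * Zi c c' i' Yo) =
  Phi W (D (i, c.1)) (D (i, c'.1)) * Phi W (D (i', c.1)) (D (i', c'.1)).
Proof.
move=> HW Hc Hi.
rewrite /Zi (Ep4 (chan_sum D HW) (fun a b c d => (a != b)%:R * (c != d)%:R)).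
  by rewrite (fact4 _ _ _ _ (fun a b => (a != b)%:R) (fun a b => (a != b)%:R)).
move: Hc; case: c => j k; case: c' => j' k' Hc /=.
have Hi' : (i' == i) = false by rewrite eq_sym (negbTE Hi).
have H1 : ((j == j') && (k == k')) = false by apply/negbTE; rewrite -xpair_eqE.
have H2 : ((j' == j) && (k' == k)) = false by apply/negbTE; rewrite -xpair_eqE eq_sym.
by rewrite !inE !xpair_eqE (negbTE Hi) /= !eqxx /= H1 ?andbF.
Qed.

Lemma p1_Phi (R : realType) (X Y : finType) (pX : X -> R) (W : X -> Y -> R) :
  p1 pX W = \sum_x pX x * Phi W x x.
Proof.
apply: eq_bigr => x _; rewrite /Phi mulr_sumr; apply: eq_bigr => a _.
rewrite mulr_sumr; apply: eq_bigr => b _.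
by case: (a != b); rewrite /= ?mulr1 ?mulr0 // !mulrA.
Qed.

Lemma p0_Phi (R : realType) (X Y : finType) (pX : X -> R) (W : X -> Y -> R) :
  p0 pX W = \sum_x \sum_x' pX x * pX x' * Phi W x x'.
Proof.
apply: eq_bigr => x _; apply: eq_bigr => x' _.
rewrite /Phi mulr_sumr; apply: eq_bigr => a _.
rewrite mulr_sumr; apply: eq_bigr => b _.
by case: (a != b); rewrite /= ?mulr1 ?mulr0 // !mulrA.
Qed.

Definition Pc (R : realType) (X Y : finType) (pX : X -> R) (W : X -> Y -> R)
  (n smax : nat) (c c' : 'I_n * 'I_smax) : R :=
  if c.1 == c'.1 then p1 pX W else p0 pX W.

Lemma EPhi (R : realType) (X Y : finType) (pX : X -> R) (W : X -> Y -> R)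
  (m n smax : nat) (c c' : 'I_n * 'I_smax) (i : 'I_m) :
  is_pmf pX ->
  Ep (fun (_ : 'I_m * 'I_n) x => pX x)
     (fun D => Phi W (D (i, c.1)) (D (i, c'.1))) = Pc pX W c c'.
Proof.
move=> [_ HX]; rewrite /Pc.
case: eqP => [<-|Hne].
  by rewrite (Ep1 (fun _ => HX) (i, c.1) (fun x => Phi W x x)) p1_Phi.
rewrite (Ep2 (fun _ => HX) (s1 := (i, c.1)) (s2 := (i, c'.1)) (fun x x' => Phi W x x')) ?p0_Phi //.
by rewrite xpair_eqE eqxx /=; apply/eqP.
Qed.

Lemma EPhiPhi (R : realType) (X Y : finType) (pX : X -> R) (W : X -> Y -> R)
  (m n smax : nat) (c c' : 'I_n * 'I_smax) (i i' : 'I_m) :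
  is_pmf pX -> i != i' ->
  Ep (fun (_ : 'I_m * 'I_n) x => pX x)
     (fun D => Phi W (D (i, c.1)) (D (i, c'.1)) * Phi W (D (i', c.1)) (D (i', c'.1)))
   = Pc pX W c c' ^+ 2.
Proof.
move=> [_ HX] Hi; rewrite /Pc expr2.
have Hi' : (i' == i) = false by rewrite eq_sym (negbTE Hi).
case: eqP => [<-|Hne].
  rewrite (Ep2 (fun _ => HX) (s1 := (i, c.1)) (s2 := (i', c.1)) (fun x x' => Phi W x x * Phi W x' x')) ?p1_Phi.
    rewrite mulr_suml; apply: eq_bigr => a _; rewrite mulr_sumr; apply: eq_bigr => b _.
    ring.
  by rewrite xpair_eqE (negbTE Hi).
rewrite (Ep4 (fun _ => HX) (s1 := (i, c.1)) (s2 := (i, c'.1)) (s3 := (i', c.1)) (s4 := (i', c'.1))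
   (fun a b c d => Phi W a b * Phi W c d)) ?p0_Phi.
  by rewrite (fact4 _ _ _ _ (fun a b => Phi W a b) (fun a b => Phi W a b)).
have H1 : (c.1 == c'.1) = false by apply/eqP.
have H2 : (c'.1 == c.1) = false by rewrite eq_sym H1.
by rewrite /= !inE !xpair_eqE (negbTE Hi) H1 H2 /= ?andbF ?eqxx ?andbF ?andbT /= ?H1 ?H2 ?Hi' ?andbF.
Qed.

Lemma Ep_lin (R : realType) (T A : finType) (q : T -> A -> R)
  (Hq : forall t, \sum_a q t a = 1) F G H (a b k : R) :
  Ep q (fun w => F w + a * G w + b * H w + k) = Ep q F + a * Ep q G + b * Ep q H + k.
Proof.
have E : forall w, F w + a * G w + b * H w + k =
   F w + a * G w + b * H w + k * (fun _ => 1) w by move=> w; rewrite mulr1.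
by rewrite (Ep_ext _ E) !Ep_add !Ep_scale Ep_one // mulr1.
Qed.

Lemma hamming_sum (R : realType) (Y : finType) (m n smax : nat)
  (Yo : {ffun 'I_m * 'I_n * 'I_smax -> Y}) (c c' : 'I_n * 'I_smax) :
  (d2_hamming Yo c c')%:R = \sum_i Zi c c' i Yo :> R.
Proof.
rewrite /d2_hamming -sum1_card natr_sum big_mkcond /=; apply: eq_bigr => i _.
by rewrite /Zi inE; case: (_ != _).
Qed.

Lemma term_eq (R : realType) (X Y : finType) (pX : X -> R) (W : X -> Y -> R)
  (m n smax : nat) (c c' : 'I_n * 'I_smax) (i i' : 'I_m) :
  is_pmf pX -> is_channel W -> c != c' ->
  Ep (fun (_ : 'I_m * 'I_n) x => pX x)
    (fun D => Ep (qY W smax D)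
      (fun Yo => (Zi c c' i Yo - Pc pX W c c') * (Zi c c' i' Yo - Pc pX W c c')))
  = if i == i' then Pc pX W c c' - Pc pX W c c' ^+ 2 else 0.
Proof.
move=> HX HW Hc; set P := Pc pX W c c'.
have HX1 : forall t : 'I_m * 'I_n, \sum_a pX a = 1 by case: HX.
have E : forall Yo : {ffun 'I_m * 'I_n * 'I_smax -> Y},
  (Zi c c' i Yo - P) * (Zi c c' i' Yo - P) =
  Zi c c' i Yo * Zi c c' i' Yo + (- P) * Zi c c' i Yo + (- P) * Zi c c' i' Yo + P ^+ 2.
  by move=> Yo; ring.
have E2 : forall D : {ffun 'I_m * 'I_n -> X}, Ep (qY W smax D)
    (fun Yo => (Zi c c' i Yo - P) * (Zi c c' i' Yo - P)) =
  Ep (qY W smax D) (fun Yo => Zi c c' i Yo * Zi c c' i' Yo) +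
  (- P) * Phi W (D (i, c.1)) (D (i, c'.1)) + (- P) * Phi W (D (i', c.1)) (D (i', c'.1))
  + P ^+ 2.
  move=> D; rewrite (Ep_ext _ E) Ep_lin; last exact: chan_sum.
  by rewrite !EZ.
rewrite (Ep_ext _ E2).
case: (eqVneq i i') => [<-|Hi].
  have E3 : forall D : {ffun 'I_m * 'I_n -> X},
    Ep (qY W smax D) (fun Yo => Zi c c' i Yo * Zi c c' i Yo) =
    Phi W (D (i, c.1)) (D (i, c'.1)).
    move=> D; rewrite -(EZ D i HW Hc); apply: Ep_ext => Yo.
    by rewrite /Zi; case: (_ != _); rewrite ?mulr1 ?mulr0.
  under Ep_ext do rewrite E3.
  rewrite (Ep_lin (q := fun (_ : 'I_m * 'I_n) x => pX x) HX1) !EPhi // -/P.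
  ring.
under Ep_ext do rewrite (EZZ _ HW Hc Hi).
rewrite (Ep_lin (q := fun (_ : 'I_m * 'I_n) x => pX x) HX1) EPhiPhi // !EPhi // -/P.
ring.
Qed.

Lemma aux_le1 (R : realType) (x : R) : x - x ^+ 2 <= 1.
Proof. nra. Qed.

Lemma Var_bound (R : realType) (X Y : finType) (pX : X -> R) (W : X -> Y -> R)
  (m n smax : nat) (c c' : 'I_n * 'I_smax) :
  is_pmf pX -> is_channel W -> c != c' ->
  Ep (fun (_ : 'I_m * 'I_n) x => pX x)
    (fun D => Ep (qY W smax D)
      (fun Yo => ((d2_hamming Yo c c')%:R - m%:R * Pc pX W c c') ^+ 2)) <= m%:R.
Proof.
move=> HX HW Hc; set P := Pc pX W c c'.
have HX1 : forall t : 'I_m * 'I_n, \sum_a pX a = 1 by case: HX.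
have E : forall Yo : {ffun 'I_m * 'I_n * 'I_smax -> Y},
  ((d2_hamming Yo c c')%:R - m%:R * P) ^+ 2 =
  \sum_i \sum_i' (Zi c c' i Yo - P) * (Zi c c' i' Yo - P).
  move=> Yo; rewrite hamming_sum.
  have -> : m%:R * P = \sum_(i < m) P by rewrite sumr_const card_ord mulr_natl.
  rewrite -sumrB expr2 mulr_suml; apply: eq_bigr => i _; by rewrite mulr_sumr.
have E2 : forall D : {ffun 'I_m * 'I_n -> X}, Ep (qY W smax D)
      (fun Yo => ((d2_hamming Yo c c')%:R - m%:R * P) ^+ 2) =
  \sum_i \sum_i' Ep (qY W smax D) (fun Yo => (Zi c c' i Yo - P) * (Zi c c' i' Yo - P)).
  move=> D; rewrite (Ep_ext (qY W smax D) E) Ep_sum; apply: eq_bigr => i _; by rewrite Ep_sum.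
rewrite (Ep_ext _ E2) Ep_sum.
under eq_bigr do rewrite Ep_sum.
under eq_bigr do under eq_bigr do rewrite term_eq //.
apply: (le_trans (y := \sum_(i < m) (1 : R))); last by rewrite sumr_const card_ord.
apply: ler_sum => i _; rewrite (bigD1 i) //= eqxx big1 ?addr0.
  exact: aux_le1.
by move=> j /negbTE; rewrite eq_sym => ->.
Qed.

Lemma Ep_le (R : realType) (T A : finType) (q : T -> A -> R) F G :
  (forall t a, 0 <= q t a) -> (forall w, F w <= G w) -> Ep q F <= Ep q G.
Proof.
move=> Hq H; apply: ler_sum => w _; apply: ler_wpM2l; last exact: H.
by apply: prodr_ge0 => t _.
Qed.

Lemma Ep_ge0 (R : realType) (T A : finType) (q : T -> A -> R) F :
  (forall t a, 0 <= q t a) -> (forall w, 0 <= F w) -> 0 <= Ep q F.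
Proof.
move=> Hq H; apply: sumr_ge0 => w _; apply: mulr_ge0; last exact: H.
by apply: prodr_ge0 => t _.
Qed.

Lemma point_bound (R : realType) (b s : bool) (d M tau dl p1v p0v : R) :
  0 < M -> 0 < dl -> p1v + dl <= tau -> tau + dl <= p0v ->
  b = ((d < M * tau) != s) ->
  (b%:R : R) <= (d - M * (if s then p1v else p0v)) ^+ 2 / (M * dl) ^+ 2.
Proof.
move=> HM Hd H1 H0 ->.
have Hk : 0 < (M * dl) ^+ 2 by apply: exprn_gt0; apply: mulr_gt0.
have h2 : 0 <= M * dl by apply: mulr_ge0; apply: ltW.
have Hz : 0 <= (d - M * (if s then p1v else p0v)) ^+ 2 / (M * dl) ^+ 2.
  by apply: divr_ge0 => //; [exact: sqr_ge0 | exact: ltW].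
case: s Hz => Hz; case: ltP => Hlt //=; rewrite ler_pdivlMr // mul1r.
  have h1 : M * dl <= d - M * p1v by nra.
  nra.
have h1 : M * dl <= M * p0v - d by nra.
nra.
Qed.

Lemma pair_bound (R : realType) (X Y : finType) (pX : X -> R) (W : X -> Y -> R)
  (m n smax : nat) (c c' : 'I_n * 'I_smax) (tau dl : R) :
  is_pmf pX -> is_channel W -> (0 < m)%N -> c != c' -> 0 < dl ->
  p1 pX W + dl <= tau -> tau + dl <= p0 pX W ->
  Ep (fun (_ : 'I_m * 'I_n) x => pX x)
    (fun D => Ep (qY W smax D) (fun Yo => (pair_error Yo tau c c' : bool)%:R))
  <= (m%:R * dl ^+ 2)^-1.
Proof.
move=> HX HW Hm Hc Hd H1 H0.
have HM : 0 < m%:R :> R by rewrite ltr0n.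
have HX0 : forall (t : 'I_m * 'I_n) x, 0 <= pX x by move=> _ x; case: HX.
have HW0 : forall (D : {ffun 'I_m * 'I_n -> X}) t y, 0 <= qY W smax D t y.
  by move=> D t y; rewrite /qY; case: (HW (D (t.1.1, t.1.2))).
set K := (m%:R * dl) ^+ 2.
have HK : 0 < K by apply: exprn_gt0; apply: mulr_gt0.
apply: (le_trans (y := Ep (fun (_ : 'I_m * 'I_n) x => pX x)
    (fun D => K^-1 * Ep (qY W smax D)
      (fun Yo => ((d2_hamming Yo c c')%:R - m%:R * Pc pX W c c') ^+ 2)))).
  apply: Ep_le => // D; rewrite -Ep_scale; apply: Ep_le => // Yo.
  rewrite mulrC; exact: (point_bound (tau := tau)).
have ES := Ep_scale (fun (_ : 'I_m * 'I_n) x => pX x) K^-1 (fun D : {ffun 'I_m * 'I_n -> X} => Ep (qY W smax D)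
      (fun Yo => ((d2_hamming Yo c c')%:R - m%:R * Pc pX W c c') ^+ 2)).
rewrite /= in ES; rewrite ES.
apply: (le_trans (y := K^-1 * m%:R)).
  by apply: ler_wpM2l; [rewrite invr_ge0 ltW | exact: Var_bound].
rewrite /K le_eqVlt; apply/orP; left; apply/eqP.
field; apply/andP; split; rewrite ?gt_eqF //.
Qed.

Lemma diag_sum (R : realType) (Y : finType) (f : Y -> R) (y1 : Y) :
  \sum_y2 (if y1 != y2 then f y2 else 0) = \sum_y2 f y2 - f y1.
Proof.
rewrite [in RHS](bigD1 y1) //= addrAC subrr add0r (bigD1 y1) //= eqxx add0r.
by apply: eq_bigr => y /negbTE; rewrite eq_sym => ->.
Qed.

Lemma p1_eq (R : realType) (X Y : finType) (pX : X -> R) (W : X -> Y -> R) :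
  is_pmf pX -> is_channel W ->
  p1 pX W = 1 - \sum_y \sum_x pX x * W x y ^+ 2.
Proof.
move=> [_ HX] HW.
rewrite /p1 (exchange_big _ _ _ _ _ (fun y x => pX x * W x y ^+ 2)) /= -HX -sumrB.
apply: eq_bigr => x _.
under eq_bigr do rewrite (diag_sum (fun y2 => pX x * W x _ * W x y2)).
rewrite sumrB -mulr_sumr; congr (_ - _).
  under eq_bigr do rewrite -mulr_sumr; case: (HW x) => _ ->.
  under eq_bigr do rewrite mulr1; rewrite -mulr_sumr; case: (HW x) => _ ->; by rewrite mulr1.
by rewrite mulr_sumr; apply: eq_bigr => y _; rewrite expr2 mulrA.
Qed.

Lemma p0_eq (R : realType) (X Y : finType) (pX : X -> R) (W : X -> Y -> R) :
  is_pmf pX -> is_channel W ->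
  p0 pX W = 1 - \sum_y pY pX W y ^+ 2.
Proof.
move=> [_ HX] HW.
have E1 : forall x1 x2, \sum_y1 \sum_y2
     (if y1 != y2 then pX x1 * pX x2 * W x1 y1 * W x2 y2 else 0) =
   pX x1 * pX x2 - \sum_y pX x1 * pX x2 * W x1 y * W x2 y.
  move=> x1 x2.
  under eq_bigr do rewrite (diag_sum (fun y2 => pX x1 * pX x2 * W x1 _ * W x2 y2)).
  rewrite sumrB; congr (_ - _).
  under eq_bigr do rewrite -mulr_sumr; case: (HW x2) => _ ->.
  under eq_bigr do rewrite mulr1; rewrite -mulr_sumr; case: (HW x1) => _ ->; by rewrite mulr1.
rewrite /p0; under eq_bigr do under eq_bigr do rewrite E1.
under eq_bigr do rewrite sumrB.
rewrite sumrB; congr (_ - _).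
  rewrite -HX; apply: eq_bigr => x1 _; by rewrite -mulr_sumr HX mulr1.
rewrite /pY; under [RHS]eq_bigr do rewrite expr2 mulr_suml.
under [RHS]eq_bigr do under eq_bigr do rewrite mulr_sumr.
rewrite [RHS]exchange_big /=; apply: eq_bigr => x1 _.
rewrite [RHS]exchange_big /=; apply: eq_bigr => x2 _.
apply: eq_bigr => y _; ring.
Qed.

Lemma p0_sub_p1 (R : realType) (X Y : finType) (pX : X -> R) (W : X -> Y -> R) :
  is_pmf pX -> is_channel W ->
  p0 pX W - p1 pX W = \sum_y \sum_x pX x * (W x y - pY pX W y) ^+ 2.
Proof.
move=> HX HW; rewrite p0_eq // p1_eq //.
have HX1 : \sum_x pX x = 1 by case: HX.
have -> : 1 - \sum_y pY pX W y ^+ 2 - (1 - \sum_y \sum_x pX x * W x y ^+ 2) =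
   \sum_y (\sum_x pX x * W x y ^+ 2 - pY pX W y ^+ 2).
  by rewrite sumrB; ring.
apply: eq_bigr => y _.
have -> : \sum_x pX x * (W x y - pY pX W y) ^+ 2 =
   \sum_x pX x * W x y ^+ 2 - (pY pX W y) * 2%:R * (\sum_x pX x * W x y)
     + (pY pX W y) ^+ 2 * \sum_x pX x.
  rewrite mulr_sumr [X in _ - _ + X]mulr_sumr -sumrB -big_split /=.
  apply: eq_bigr => x _; ring.
by rewrite HX1 -/(pY pX W y); ring.
Qed.

Lemma p1_lt_p0 (R : realType) (X Y : finType) (pX : X -> R) (W : X -> Y -> R) :
  is_pmf pX -> is_channel W ->
  (fun xy : X * Y => pX xy.1 * W xy.1 xy.2) <>
    (fun xy : X * Y => pX xy.1 * pY pX W xy.2) ->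
  p1 pX W < p0 pX W.
Proof.
move=> HX HW Hne; rewrite -subr_gt0 p0_sub_p1 //.
have Hge : forall y x, 0 <= pX x * (W x y - pY pX W y) ^+ 2.
  by move=> y x; apply: mulr_ge0; [case: HX | exact: sqr_ge0].
rewrite lt_def sumr_ge0 ?andbT; last by move=> y _; apply: sumr_ge0 => x _.
apply/negP => /eqP Hs; apply: Hne.
have Hge2 : forall y, 0 <= \sum_x pX x * (W x y - pY pX W y) ^+ 2.
  by move=> y; apply: sumr_ge0 => x _.
have H := psumr_eq0P (fun y' _ => Hge2 y') Hs.
apply: funext => -[x y] /=.
have H2 := psumr_eq0P (fun x' _ => Hge y x') (H y isT).
move: (H2 x isT) => /eqP.
rewrite mulf_eq0 sqrf_eq0 subr_eq0 => /orP [/eqP ->|/eqP ->]; by rewrite ?mul0r.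
Qed.

Lemma union_bound (R : realType) (X Y : finType) (pX : X -> R)
  (smax : nat) (pS : 'I_smax.+1 -> R) (W : X -> Y -> R) (m n : nat) (tau : R) :
  is_pmf pX -> is_pmf pS -> is_channel W ->
  error_prob pX pS W m n tau <=
  \sum_(cc : ('I_n * 'I_smax) * ('I_n * 'I_smax))
    Ep (fun (_ : 'I_m * 'I_n) x => pX x)
      (fun D => Ep (qY W smax D) (fun Yo => (pair_error Yo tau cc.1 cc.2 : bool)%:R)).
Proof.
move=> HX HS HW.
apply: (le_trans (y := Ex pX pS W m n (fun _ _ Yo =>
   \sum_(cc : ('I_n * 'I_smax) * ('I_n * 'I_smax)) (pair_error Yo tau cc.1 cc.2 : bool)%:R))).
  rewrite /error_prob /Ex; apply: ler_sum => D1 _; apply: ler_sum => S _.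
  apply: ler_sum => Th _; apply: ler_sum => Yo _.
  set w := (X in if _ then X else _).
  have Hw : 0 <= w.
    rewrite /w; apply: mulr_ge0; first apply: mulr_ge0; first apply: mulr_ge0.
    - by apply: prodr_ge0 => ij _; case: HX.
    - by apply: prodr_ge0 => j _; case: HS.
    - by rewrite invr_ge0.
    - by apply: prodr_ge0 => ijk _; case: (HW (D1 ((Th^-1)%g ijk.1.1, ijk.1.2))).
  case Hse: (some_error S Yo tau); last first.
    by apply: mulr_ge0 => //; apply: sumr_ge0 => cc _.
  rewrite -/w; apply: ler_peMr => //.
  move: Hse; rewrite /some_error => /hasP [cc _ Hpe].
  rewrite (bigD1 cc) //= Hpe lerDl; apply: sumr_ge0 => cc' _.
  by case: (pair_error _ _ _ _).
rewrite Ex_red //.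
under Ep_ext do rewrite Ep_sum.
by rewrite Ep_sum.
Qed.

Lemma p1_ge0 (R : realType) (X Y : finType) (pX : X -> R) (W : X -> Y -> R) :
  is_pmf pX -> is_channel W -> 0 <= p1 pX W.
Proof.
move=> [HX _] HW; apply: sumr_ge0 => x _; apply: sumr_ge0 => y1 _; apply: sumr_ge0 => y2 _.
case: (_ != _) => //; apply: mulr_ge0; first apply: mulr_ge0 => //.
  by case: (HW x).
by case: (HW x).
Qed.

Lemma err_bound (R : realType) (X Y : finType) (pX : X -> R)
  (smax : nat) (pS : 'I_smax.+1 -> R) (W : X -> Y -> R) (m n : nat) (tau dl : R) :
  is_pmf pX -> is_pmf pS -> is_channel W -> (0 < m)%N -> 0 < dl ->
  p1 pX W + dl <= tau -> tau + dl <= p0 pX W ->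
  error_prob pX pS W m n tau <= (n * smax * (n * smax))%:R * (m%:R * dl ^+ 2)^-1.
Proof.
move=> HX HS HW Hm Hd H1 H0.
have Htau : 0 < tau.
  have := p1_ge0 HX HW; move: Hd H1; clear; move=> Hd H1 Hp; lra.
apply: (le_trans (union_bound m n tau HX HS HW)).
have -> : (n * smax * (n * smax))%:R * (m%:R * dl ^+ 2)^-1 =
  \sum_(cc : ('I_n * 'I_smax) * ('I_n * 'I_smax)) (m%:R * dl ^+ 2)^-1 :> R.
  by rewrite sumr_const !card_prod !card_ord mulr_natl.
apply: ler_sum => -[c c'] _ /=.
case: (eqVneq c c') => [<-|Hc]; last exact: pair_bound.
have -> : Ep (fun (_ : 'I_m * 'I_n) x => pX x)
   (fun D => Ep (qY W smax D) (fun Yo => (pair_error Yo tau c c : bool)%:R)) = 0.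
  have Z : forall D : {ffun 'I_m * 'I_n -> X},
    Ep (qY W smax D) (fun Yo => (pair_error Yo tau c c : bool)%:R) = 0.
    move=> D; rewrite /Ep big1 // => Yo _.
    suff -> : pair_error Yo tau c c = false by rewrite mulr0.
    rewrite /pair_error /d2_hamming eqxx.
    have -> : #|[pred i : 'I_m | Yo (i, c.1, c.2) != Yo (i, c.1, c.2)]| = 0%N.
      by apply: eq_card0 => i; rewrite inE eqxx.
    by rewrite mulr_gt0 // ltr0n.
  by rewrite (Ep_ext _ Z) /Ep big1 // => D _; rewrite mulr0.
by rewrite invr_ge0; apply: mulr_ge0; [exact: ler0n | exact: sqr_ge0].
Qed.

Unset Implicit Arguments. Set Strict Implicit. Set Printing Implicit Defensive.

Lemma final_ineq (R : realType) (N S M a d : R) :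
  1 <= N -> 0 < a -> 0 < d -> (a * N / 3%:R) ^+ 3 <= M ->
  N * S * (N * S) * (M * d ^+ 2)^-1 <=
  (54%:R * S ^+ 2 / (a ^+ 3 * d ^+ 2)) * (N + 1)^-1.
Proof.
move=> HN Ha Hd HM.
have HN0 : 0 < N by lra.
have HQ : 0 < (a * N / 3%:R) ^+ 3 by apply: exprn_gt0; apply: divr_gt0 => //; apply: mulr_gt0.
have Hd2 : 0 < d ^+ 2 by apply: exprn_gt0.
have HM0 : 0 < M by apply: lt_le_trans HM.
apply: (le_trans (y := N * S * (N * S) * ((a * N / 3%:R) ^+ 3 * d ^+ 2)^-1)).
  apply: ler_wpM2l; first by nra.
  rewrite lef_pV2 ?posrE ?mulr_gt0 //.
  by apply: ler_wpM2r => //; apply: ltW.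
have -> : N * S * (N * S) * ((a * N / 3%:R) ^+ 3 * d ^+ 2)^-1 =
   (27%:R * S ^+ 2 / (a ^+ 3 * d ^+ 2)) * N^-1.
  by field; rewrite !gt_eqF.
have HC : 0 <= S ^+ 2 / (a ^+ 3 * d ^+ 2).
  by apply: divr_ge0; [exact: sqr_ge0 | apply: ltW; apply: mulr_gt0 => //; apply: exprn_gt0].
have -> : 27%:R * S ^+ 2 / (a ^+ 3 * d ^+ 2) = 27%:R * (S ^+ 2 / (a ^+ 3 * d ^+ 2)) by ring.
have -> : 54%:R * S ^+ 2 / (a ^+ 3 * d ^+ 2) = 27%:R * (S ^+ 2 / (a ^+ 3 * d ^+ 2)) * 2%:R by ring.
set Xc := S ^+ 2 / (a ^+ 3 * d ^+ 2).
rewrite -[27%:R * Xc * 2%:R * _]mulrA.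
apply: ler_wpM2l; first by apply: mulr_ge0 => //; lra.
have HN1 : 0 < N + 1 by lra.
rewrite ler_pdivlMr // mulrDr mulVf ?gt_eqF // mulr1; have : N^-1 <= 1 by rewrite invf_le1. lra.
Qed.

Lemma err_ge0 (R : realType) (X Y : finType) (pX : X -> R)
  (smax : nat) (pS : 'I_smax.+1 -> R) (W : X -> Y -> R) (m n : nat) (tau : R) :
  is_pmf pX -> is_pmf pS -> is_channel W -> 0 <= error_prob pX pS W m n tau.
Proof.
move=> HX HS HW.
apply: sumr_ge0 => D1 _; apply: sumr_ge0 => S _; apply: sumr_ge0 => Th _; apply: sumr_ge0 => Yo _.
case: (some_error _ _ _) => //.
apply: mulr_ge0; first apply: mulr_ge0; first apply: mulr_ge0.
- by apply: prodr_ge0 => ij _; case: HX.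
- by apply: prodr_ge0 => j _; case: HS.
- by rewrite invr_ge0.
- by apply: prodr_ge0 => ijk _; case: (HW (D1 ((Th^-1)%g ijk.1.1, ijk.1.2))).
Qed.

Theorem lemma1 (R : realType) (X Y : finType) (pX : X -> R) (smax : nat)
  (pS : 'I_smax.+1 -> R) (W : X -> Y -> R) (m : nat -> nat) :
  is_pmf pX -> is_pmf pS -> is_channel W ->
  (fun xy : X * Y => pX xy.1 * W xy.1 xy.2) <>
    (fun xy : X * Y => pX xy.1 * pY pX W xy.2) ->
  (exists2 Rate : R, 0 < Rate &
     (fun n : nat => ln (m n)%:R / n%:R) @ \oo --> Rate) ->
  p1 pX W < p0 pX W /\
  (forall tau : R, p1 pX W < tau -> tau < p0 pX W ->
     (fun n : nat => error_prob pX pS W (m n) n tau) @ \oo --> 0).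
Proof.
move=> HX HS HW Hne [Rate HR Hcvg].
have Hlt := p1_lt_p0 HX HW Hne.
split => // tau Ht1 Ht0.
set dl := Order.min (tau - p1 pX W) (p0 pX W - tau).
have Hd : 0 < dl by rewrite lt_min !subr_gt0 Ht1 Ht0.
have H1 : p1 pX W + dl <= tau.
  have : dl <= tau - p1 pX W by rewrite ge_min lexx.
  move: Hd; clear; move=> Hd H; lra.
have H0 : tau + dl <= p0 pX W.
  have : dl <= p0 pX W - tau by rewrite ge_min lexx orbT.
  move: Hd; clear; move=> Hd H; lra.
set a := Rate / 2%:R.
have Ha : 0 < a by rewrite divr_gt0.
set C := 54%:R * (smax%:R : R) ^+ 2 / (a ^+ 3 * dl ^+ 2).
apply: (squeeze_cvgr (f := fun _ => 0) (h := fun n => C * harmonic n)); last first.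
- by rewrite -(mulr0 C); apply: cvgMl_tmp; exact: cvg_harmonic.
- exact: cvg_cst.
near=> n.
have n1 : (1 <= n)%N by near: n; exact: nbhs_infty_ge.
have Hln : a < ln (m n)%:R / n%:R.
  near: n; apply: (cvgr_gt Rate Hcvg); rewrite /a; lra.
apply/andP; split; first exact: err_ge0.
have HN : (1 : R) <= n%:R by rewrite ler1n.
have HNp : (0 : R) < n%:R by lra.
have Hln' : a * n%:R < ln (m n)%:R by rewrite -ltr_pdivlMr.
have Hm1 : (1 : R) < (m n)%:R.
  rewrite ltNge; apply/negP => /ln_le0 H.
  have : 0 < a * n%:R by apply: mulr_gt0.
  lra.
have Hm : (0 < m n)%N by rewrite -(ltr0n R); lra.
have HM : (a * n%:R / 3%:R) ^+ 3 <= (m n)%:R.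
  have -> : (m n)%:R = expR (ln (m n)%:R) :> R by rewrite lnK // posrE; lra.
  have -> : ln (m n)%:R = 3%:R * (ln (m n)%:R / 3%:R) :> R.
    by rewrite mulrC -mulrA mulVf ?mulr1 // pnatr_eq0.
  rewrite expRM_natl.
  apply: lerXn2r; rewrite ?nnegrE.
  - by apply: divr_ge0; [apply: mulr_ge0; apply: ltW|].
  - by apply: ltW; apply: expR_gt0.
  apply: (le_trans _ (expR_ge1Dx _)).
  have : a * n%:R / 3%:R <= ln (m n)%:R / 3%:R.
    by rewrite ler_pM2r ?invr_gt0 ?ltr0n //; apply: ltW.
  lra.
apply: (le_trans (err_bound n HX HS HW Hm Hd H1 H0)).
have -> : harmonic n = ((n%:R : R) + 1)^-1 by rewrite /harmonic /= -natr1.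
rewrite natrM natrM.
rewrite /C; exact: (@final_ineq R _ (smax%:R) _ _ _ HN Ha Hd HM).
Unshelve. all: end_near.
Qed.
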